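(* Let $K$ be any field, $m\ge 2$ an integer, $R=K[x_1,\dots,x_{3m+3}]$, and for $n=1,\dots,m$ set $s_n=x_{3n-2}x_{3n+2}$, $t_n=x_{3n+1}x_{3n+3}$, $u_n=x_{3n+1}x_{3n+2}$, $v_n=x_{3n-1}x_{3n+3}$, and $r_1=x_1x_2$. Let $I_m=(r_1, s_n,t_n,u_n,v_n : 1\le n\le m)$ and $J_m=(x_1x_2,\ s_n+t_n,\ u_n+v_n : 1\le n\le m)$. Then $I_m=\sqrt{J_m}$. *)

(* Defs.v *)
From mathcomp Require Import all_boot all_algebra.
From mathcomp Require Import mpoly.
Set Implicit Arguments. Unset Strict Implicit. Unset Printing Implicit Defensive.
Import GRing.Theory.
Local Open Scope ring_scope.

(* The polynomial ring R = K[x_1,...,x_{3m+3}] is {mpoly K[(3*m).+3]};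
   the paper's variable x_j (1 <= j <= 3m+3) is 'X_(j-1). *)
Definition Rm (K : fieldType) (m : nat) := {mpoly K[(3 * m).+3]}.

Definition xv (K : fieldType) (m : nat) (j : nat) : Rm K m :=
  'X_(inord j.-1).

Definition in_ideal (R : comRingType) (gs : seq R) (f : R) : Prop :=
  exists c : 'I_(size gs) -> R, f = \sum_(i < size gs) c i * gs`_i.

Definition in_radical (R : comRingType) (gs : seq R) (f : R) : Prop :=
  exists k : nat, in_ideal gs (f ^+ k).

Section Gens.
Variables (K : fieldType) (m : nat).
Local Notation x := (xv K m).
Definition r1 : Rm K m := x 1 * x 2.
Definition s_ (n : nat) : Rm K m := x (3*n-2) * x (3*n+2).
Definition t_ (n : nat) : Rm K m := x (3*n+1) * x (3*n+3).
Definition u_ (n : nat) : Rm K m := x (3*n+1) * x (3*n+2).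
Definition v_ (n : nat) : Rm K m := x (3*n-1) * x (3*n+3).

Definition I_gens : seq (Rm K m) :=
  r1 :: flatten [seq [:: s_ n; t_ n; u_ n; v_ n] | n <- iota 1 m].
Definition J_gens : seq (Rm K m) :=
  x 1 * x 2 :: flatten [seq [:: s_ n + t_ n; u_ n + v_ n] | n <- iota 1 m].
End Gens.

(* Main.v *)
Require Import Defs.
From mathcomp Require Import all_boot all_algebra.
From mathcomp Require Import mpoly.
From mathcomp Require Import ring zify.
Set Implicit Arguments. Unset Strict Implicit. Unset Printing Implicit Defensive.
Import GRing.Theory.
Local Open Scope ring_scope.

Section Ideal.
Variables (R : comRingType) (gs : seq R).

Lemma in_ideal0 : in_ideal gs 0.
Proof. by exists (fun _ => 0); rewrite big1 // => i _; rewrite mul0r. Qed.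

Lemma in_idealD f g : in_ideal gs f -> in_ideal gs g -> in_ideal gs (f + g).
Proof.
move=> [c1 ->] [c2 ->]; exists (fun i => c1 i + c2 i).
by rewrite -big_split /=; apply: eq_bigr => i _; rewrite mulrDl.
Qed.

Lemma in_idealM a f : in_ideal gs f -> in_ideal gs (a * f).
Proof.
move=> [c ->]; exists (fun i => a * c i).
by rewrite mulr_sumr; apply: eq_bigr => i _; rewrite mulrA.
Qed.

Lemma in_idealMr a f : in_ideal gs f -> in_ideal gs (f * a).
Proof. by move=> h; rewrite mulrC; apply: in_idealM. Qed.

Lemma in_ideal_sum (I : Type) (r : seq I) (P : pred I) (F : I -> R) :
  (forall i, P i -> in_ideal gs (F i)) -> in_ideal gs (\sum_(i <- r | P i) F i).
Proof.
move=> h; apply: (big_ind (in_ideal gs)) => //; [exact: in_ideal0 | exact: in_idealD].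
Qed.

Lemma in_ideal_mem g : g \in gs -> in_ideal gs g.
Proof.
move=> hg; have hlt : (index g gs < size gs)%N by rewrite index_mem.
exists (fun i : 'I_(size gs) => ((i : nat) == index g gs)%:R).
rewrite (bigD1 (Ordinal hlt)) //= eqxx mul1r nth_index // big1 ?addr0 //.
move=> i hi; suff /negbTE -> : (i : nat) != index g gs by rewrite mul0r.
by apply: contra hi => /eqP h; apply/eqP/val_inj.
Qed.

Lemma in_ideal_ind (P : R -> Prop) f :
  P 0 -> (forall x y, P x -> P y -> P (x + y)) -> (forall a x, P x -> P (a * x)) ->
  (forall g, g \in gs -> P g) -> in_ideal gs f -> P f.
Proof.
move=> P0 PD PM Pg [c ->]; apply: (big_ind P) => // i _; apply: PM; apply: Pg.
exact: mem_nth.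
Qed.

Lemma in_radicalD f g : in_radical gs f -> in_radical gs g -> in_radical gs (f + g).
Proof.
move=> [a ha] [b hb]; exists (a + b)%N; rewrite exprDn.
apply: in_ideal_sum => i _; rewrite -mulr_natr; apply: in_idealMr.
have [hi|hi] := leqP b i.
  have -> : (i : nat) = (i - b + b)%N by rewrite subnK.
  rewrite exprD mulrA; exact: in_idealM hb.
have -> : (a + b - i = a + b - i - a + a)%N by rewrite subnK //; move: hi; move: (i : nat) => k; lia.
rewrite exprD -mulrA mulrC -mulrA; exact: in_idealMr ha.
Qed.

Lemma in_radicalM a f : in_radical gs f -> in_radical gs (a * f).
Proof. by move=> [k hk]; exists k; rewrite exprMn; apply: in_idealM. Qed.

Lemma in_radical0 : in_radical gs 0.
Proof. by exists 1%N; rewrite expr1; apply: in_ideal0. Qed.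

Lemma in_radical_mem g : g \in gs -> in_radical gs g.
Proof. by move=> h; exists 1%N; rewrite expr1; apply: in_ideal_mem. Qed.

Lemma in_radicalX f k : in_radical gs (f ^+ k) -> in_radical gs f.
Proof. by move=> [j hj]; exists (k * j)%N; rewrite exprM. Qed.

End Ideal.
Lemma local_rad (R : comRingType) (gs : seq R) (a b c d e : R) :
  in_radical gs (a * b) -> in_radical gs (a * d + c * e) -> in_radical gs (c * d + b * e) ->
  [/\ in_radical gs (a * d), in_radical gs (c * e), in_radical gs (c * d) & in_radical gs (b * e)].
Proof.
move=> hw hp hq.
have H : forall z u1 u2 u3, z ^+ 2 = u1 * (a * d + c * e) + u2 * (c * d + b * e) + u3 * (a * b) ->
  in_radical gs z.
  move=> z u1 u2 u3 hz; apply: (@in_radicalX _ _ _ 2); rewrite hz.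
  by apply: in_radicalD; [apply: in_radicalD|]; apply: in_radicalM.
split.
- by apply: (H _ (a * d) (- (a * e)) (e * e)); ring.
- by apply: (H _ (c * e) (- (a * e)) (e * e)); ring.
- by apply: (H _ (- (b * d)) (c * d) (d * d)); ring.
- by apply: (H _ (- (b * d)) (b * e) (d * d)); ring.
Qed.

Section Main.
Variables (K : fieldType) (m : nat).
Local Notation N := (3 * m).+3.
Local Notation x := (xv K m).
Local Notation Ig := (I_gens K m).
Local Notation Jg := (J_gens K m).
Local Notation Rad := (in_radical Jg).

Lemma memJ1 : x 1 * x 2 \in Jg.
Proof. by rewrite inE eqxx. Qed.

Lemma memJst n : n \in iota 1 m -> s_ K m n + t_ K m n \in Jg.
Proof.
move=> hn; rewrite inE; apply/orP; right; apply/flattenP.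
exists [:: s_ K m n + t_ K m n; u_ K m n + v_ K m n]; last by rewrite inE eqxx.
exact: (map_f _ hn).
Qed.

Lemma memJuv n : n \in iota 1 m -> u_ K m n + v_ K m n \in Jg.
Proof.
move=> hn; rewrite inE; apply/orP; right; apply/flattenP.
exists [:: s_ K m n + t_ K m n; u_ K m n + v_ K m n]; last by rewrite !inE eqxx orbT.
exact: (map_f _ hn).
Qed.

Lemma step n : n \in iota 1 m -> Rad (x (3 * n - 2) * x (3 * n - 1)) ->
  [/\ Rad (s_ K m n), Rad (t_ K m n), Rad (u_ K m n) & Rad (v_ K m n)].
Proof.
move=> hn hw.
exact: (local_rad hw (in_radical_mem (memJst hn)) (in_radical_mem (memJuv hn))).
Qed.

Lemma rad_u n : (n <= m)%N -> Rad (x (3 * n + 1) * x (3 * n + 2)).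
Proof.
elim: n => [|n IH] hn; first by rewrite muln0; apply: in_radical_mem; exact: memJ1.
have hn' : n.+1 \in iota 1 m by rewrite mem_iota; move: hn; lia.
have e1 : (3 * n.+1 - 2 = 3 * n + 1)%N by lia.
have e2 : (3 * n.+1 - 1 = 3 * n + 2)%N by lia.
have := IH (ltnW hn); rewrite -e1 -e2 => /(step hn') [_ _ hu _]; exact: hu.
Qed.

Lemma Ig_rad g : g \in Ig -> Rad g.
Proof.
rewrite inE => /orP[/eqP->|/flattenP[s /mapP[n hn ->]]].
  by have := rad_u (leq0n m); rewrite muln0.
have hn1 : (1 <= n <= m)%N by move: hn; rewrite mem_iota; lia.
have e1 : (3 * n - 2 = 3 * n.-1 + 1)%N by lia.
have e2 : (3 * n - 1 = 3 * n.-1 + 2)%N by lia.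
have := rad_u (n := n.-1) ltac:(lia); rewrite -e1 -e2 => /(step hn) [h1 h2 h3 h4].
by rewrite !inE => /or4P[] /eqP->.
Qed.

Lemma dir1 f : in_ideal Ig f -> Rad f.
Proof.
apply: in_ideal_ind; [exact: in_radical0 | exact: in_radicalD | exact: in_radicalM | exact: Ig_rad].
Qed.

Definition o (j : nat) : 'I_N := inord j.-1.

Definition E : seq ('I_N * 'I_N) :=
  (o 1, o 2) :: flatten [seq [:: (o (3*n-2), o (3*n+2)); (o (3*n+1), o (3*n+3));
                                (o (3*n+1), o (3*n+2)); (o (3*n-1), o (3*n+3))] | n <- iota 1 m].

Lemma IgE : Ig = [seq 'X_e.1 * 'X_e.2 | e <- E].
Proof.
rewrite /I_gens /E /= map_flatten -map_comp; congr (_ :: flatten _).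
Qed.

Lemma o_neq a b : (0 < a <= N)%N -> (0 < b <= N)%N -> a != b -> o a != o b.
Proof.
move=> ha hb hab; apply/eqP => /(congr1 val); rewrite /= !inordK; try lia; move: hab => /eqP; lia.
Qed.

Lemma E_neq e : e \in E -> e.1 != e.2.
Proof.
rewrite inE => /orP[/eqP->|/flattenP[s /mapP[n hn ->]]]; first by apply: o_neq; lia.
have hn1 : (1 <= n <= m)%N by move: hn; rewrite mem_iota; lia.
by rewrite !inE => /or4P[] /eqP-> /=; apply: o_neq; lia.
Qed.

Definition uncovb (mu : 'X_{1..N}) :=
  all (fun e : 'I_N * 'I_N => ~~ ((0 < mu e.1)%N && (0 < mu e.2)%N)) E.

Definition sig (mu : 'X_{1..N}) : N.-tuple (Rm K m) :=
  [tuple (if (0 < mu i)%N then 'X_i else 0) | i < N].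

Lemma sigX mu i : ('X_i : Rm K m) \mPo sig mu = if (0 < mu i)%N then 'X_i else 0.
Proof. by rewrite comp_mpolyXU -tnth_nth tnth_mktuple. Qed.

Lemma sig_edge mu e : uncovb mu -> e \in E -> ('X_e.1 * 'X_e.2 : Rm K m) \mPo sig mu = 0.
Proof.
move=> /allP hu he; have := hu e he; rewrite rmorphM /= !sigX.
by case: (0 < mu e.1)%N; case: (0 < mu e.2)%N; rewrite ?mul0r ?mulr0.
Qed.

Lemma memE1 : (o 1, o 2) \in E.
Proof. by rewrite inE eqxx. Qed.

Lemma memEn n e : n \in iota 1 m ->
  e \in [:: (o (3*n-2), o (3*n+2)); (o (3*n+1), o (3*n+3));
            (o (3*n+1), o (3*n+2)); (o (3*n-1), o (3*n+3))] -> e \in E.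
Proof.
move=> hn he; rewrite inE; apply/orP; right; apply/flattenP.
by eexists; [exact: (map_f _ hn)|].
Qed.

Lemma sig_J mu g : uncovb mu -> g \in Jg -> g \mPo sig mu = 0.
Proof.
move=> hu; rewrite inE => /orP[/eqP->|/flattenP[s /mapP[n hn ->]]].
  exact: (sig_edge hu memE1).
rewrite !inE => /orP[]/eqP-> ; rewrite rmorphD /=.
  rewrite (sig_edge (e := (o (3*n-2), o (3*n+2))) hu) ?(memEn hn) ?inE ?eqxx ?orbT //.
  by rewrite (sig_edge (e := (o (3*n+1), o (3*n+3))) hu) ?(memEn hn) ?inE ?eqxx ?orbT ?addr0.
rewrite (sig_edge (e := (o (3*n+1), o (3*n+2))) hu) ?(memEn hn) ?inE ?eqxx ?orbT //.
by rewrite (sig_edge (e := (o (3*n-1), o (3*n+3))) hu) ?(memEn hn) ?inE ?eqxx ?orbT ?addr0.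
Qed.

Lemma sig_coeff mu (p : Rm K m) : (p \mPo sig mu)@_mu = p@_mu.
Proof.
rewrite comp_mpolyEX [in RHS](mpolyE p) !raddf_sum /=; apply: eq_bigr => nu _.
rewrite !mcoeffZ; congr (_ * _); rewrite comp_mpolyX.
have [hall|] := boolP [forall i, (0 < nu i)%N ==> (0 < mu i)%N].
  rewrite [in RHS]mpolyXE_id; congr (_ @_ _); apply: eq_bigr => i _.
  rewrite tnth_mktuple; have := forallP hall i.
  by case: (0 < mu i)%N; case: (nu i) => [|k] //= _; rewrite !expr0.
move=> /forallPn[i]; rewrite negb_imply => /andP[h1 h2].
rewrite (bigD1 i) //= tnth_mktuple (negbTE h2) expr0n.
have -> : (nu i == 0%N) = false by case: (nu i) h1.
rewrite mul0r mcoeff0 mcoeffX.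
suff /negbTE -> : nu != mu by [].
by apply: contra h2 => /eqP <-.
Qed.

Lemma rad_to_cov f k mu : in_ideal Jg (f ^+ k) -> mu \in msupp f -> ~~ uncovb mu.
Proof.
move=> hk hmu; apply/negP => hu.
have h0 : (f ^+ k) \mPo sig mu = 0.
  apply: (in_ideal_ind (P := fun g => g \mPo sig mu = 0)) hk.
  - exact: raddf0.
  - by move=> y z hy hz; rewrite raddfD /= hy hz addr0.
  - by move=> a y hy; rewrite rmorphM /= hy mulr0.
  - by move=> g hg; exact: sig_J.
move: h0; rewrite rmorphXn /= => /eqP; rewrite expf_eq0 => /andP[_ /eqP hf].
by move: hmu; rewrite -[mu \in _]negbK -mcoeff_eq0 -sig_coeff hf mcoeff0 eqxx.
Qed.

Lemma cov_in_I mu : ~~ uncovb mu -> in_ideal Ig 'X_[mu].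
Proof.
move=> /allPn[e he]; rewrite negbK => /andP[h1 h2].
have hne := E_neq he.
have -> : mu = ((mu - U_(e.1) - U_(e.2)) + (U_(e.1) + U_(e.2)))%MM.
  apply/mnmP => k; rewrite !mnmDE !mnmBE !mnm1E.
  have [<-|n1] := eqVneq e.1 k.
    by rewrite ?eqxx eq_sym (negbTE hne) /=; move: h1; lia.
  rewrite ?(negbTE n1); have [<-|n2] := eqVneq e.2 k.
    by rewrite ?eqxx /=; move: h2; lia.
  by rewrite ?(negbTE n2) ?(negbTE n1) /=; lia.
rewrite mpolyXD mpolyXD; apply: in_idealM; apply: in_ideal_mem.
by rewrite IgE; apply: (map_f (fun e : 'I_N * 'I_N => 'X_e.1 * 'X_e.2) he).
Qed.

Lemma all_cov_in_I f : (forall mu, mu \in msupp f -> ~~ uncovb mu) -> in_ideal Ig f.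
Proof.
move=> h; rewrite [f]mpolyE big_seq; apply: in_ideal_sum => mu hmu.
by rewrite -mul_mpolyC; apply: in_idealM; apply: cov_in_I; apply: h.
Qed.

End Main.


Theorem mainTheorem6 (K : fieldType) (m : nat) (hm : (2 <= m)%N) :
  forall f : Rm K m, in_ideal (I_gens K m) f <-> in_radical (J_gens K m) f.
Proof.
move=> f; split; first exact: dir1.
move=> [k hk]; apply: all_cov_in_I => mu hmu; exact: rad_to_cov hk hmu.
Qed.
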